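(* Let $n\ge3$ and $k\ge0$ be integers. There exists a subset of $\mathrm{Inc}(A,B)$ that is independent in $G_n^k$ and not reversible if and only if $n\le 2k$.
   Context: For integers $n\ge3$, $k\ge0$, the crown $S_n^k$ is the poset with ground set $A\cup B$, $A=\{a_1,\dots,a_{n+k}\}$, $B=\{b_1,\dots,b_{n+k}\}$, indices cyclic modulo $n+k$; elements of $A$ are pairwise incomparable, as are elements of $B$, and $a_i$ is incomparable to $b_j$ when $j\in\{i,i+1,\dots,i+k\}$ (mod $n+k$), while $a_i<b_j$ otherwise. $\mathrm{Inc}(A,B)$ is the set of pairs $(a,b)\in A\times B$ with $a$ incomparable to $b$. The graph $G_n^k$ has vertex set $\mathrm{Inc}(A,B)$, with $(a,b)$ adjacent to $(x,y)$ iff $a<y$ and $x<b$ in $S_n^k$. A set $R\subseteq\mathrm{Inc}(A,B)$ is reversible if there is a linear extension $L$ of $S_n^k$ with $b<a$ in $L$ for all $(a,b)\in R$. *)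

(* Defs.v *)
From mathcomp Require Import all_boot.
Set Implicit Arguments. Unset Strict Implicit. Unset Printing Implicit Defensive.

(* Ground set of the crown S_n^k: A = {a_0..a_{n+k-1}} encoded as inl i,
   B = {b_0..b_{n+k-1}} encoded as inr j (0-indexed, cyclic mod n+k). *)
Definition crown_elt (n k : nat) : finType := ('I_(n + k) + 'I_(n + k))%type.

(* Strict order of S_n^k: a_i < b_j iff j is NOT in {i, i+1, ..., i+k} mod n+k;
   no other strict relations. *)
Definition crown_lt (n k : nat) (x y : crown_elt n k) : bool :=
  match x, y with
  | inl i, inr j => k < (j + (n + k) - i) %% (n + k)
  | _, _ => false
  end.

Definition crown_incomparable (n k : nat) (x y : crown_elt n k) : bool :=
  [&& x != y, ~~ crown_lt x y & ~~ crown_lt y x].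

Definition IncAB (n k : nat) : {set 'I_(n + k) * 'I_(n + k)} :=
  [set p | crown_incomparable (n:=n) (k:=k) (inl p.1) (inr p.2)].

Definition G_adj (n k : nat) (p q : 'I_(n + k) * 'I_(n + k)) : bool :=
  crown_lt (n:=n) (k:=k) (inl p.1) (inr q.2) &&
  crown_lt (n:=n) (k:=k) (inl q.1) (inr p.2).

Definition G_independent (n k : nat) (R : {set 'I_(n + k) * 'I_(n + k)}) : Prop :=
  forall p q, p \in R -> q \in R -> ~~ G_adj p q.

Definition linear_extension (n k : nat) (L : rel (crown_elt n k)) : Prop :=
  [/\ irreflexive L, transitive L,
      (forall x y, x != y -> L x y || L y x) &
      (forall x y, crown_lt x y -> L x y)].

Definition reversible (n k : nat) (R : {set 'I_(n + k) * 'I_(n + k)}) : Prop :=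
  exists L : rel (crown_elt n k), linear_extension L /\
    forall p, p \in R -> L (inr p.2) (inl p.1).

(* Main.v *)
Require Import Defs.
From mathcomp Require Import all_boot zify.

Lemma modE (N i j : nat) : i < N -> j < N ->
  (j + N - i) %% N = if i <= j then j - i else j + N - i.
Proof.
move=> hi hj; case: leqP => h.
- have -> : j + N - i = (j - i) + N by lia.
  by rewrite modnDr modn_small //; lia.
- by rewrite modn_small //; lia.
Qed.

Definition clt (n k i j : nat) := k < (j + (n + k) - i) %% (n + k).

Lemma cltE n k i j : i < n + k -> j < n + k ->
  clt n k i j = (k < if i <= j then j - i else j + (n + k) - i).
Proof. by move=> hi hj; rewrite /clt modE. Qed.

Definition sh n k c i := (i + (n + k) - c) %% (n + k).

Lemma sh_lt n k c i : c < n + k -> sh n k c i < n + k.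
Proof. move=> h; rewrite /sh ltn_pmod //; lia. Qed.

Lemma clt_shift n k c i j : c < n + k -> i < n + k -> j < n + k ->
  clt n k i j = clt n k (sh n k c i) (sh n k c j).
Proof.
move=> hc hi hj.
rewrite (@cltE n k _ _ (@sh_lt n k c i hc) (@sh_lt n k c j hc)) cltE // /sh !modE //.
case: (leqP c i) => ?; case: (leqP c j) => ?; case: (leqP i j) => ? /=;
 case: ifP => ? /=; apply/idP/idP; lia.
Qed.

Lemma sh0 n k c : c < n + k -> sh n k c c = 0.
Proof. by move=> h; rewrite /sh addnC addnK modnn. Qed.

Lemma short4' n k xp ya xa yb yq : 2 * k < n ->
  xp < n + k -> ya < n + k -> xa < n + k -> yb < n + k -> yq < n + k ->
  ~~ (k < (if xa <= ya then ya - xa else ya + (n + k) - xa)) ->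
  ~~ (k < yb) ->
  (k < (if xp <= ya then ya - xp else ya + (n + k) - xp)) ->
  (k < (if xa <= yb then yb - xa else yb + (n + k) - xa)) ->
  k < yq -> ~~ (k < ya) ->
  [|| (k < (if xp <= yq then yq - xp else yq + (n + k) - xp)),
      (k < (if xp <= yb then yb - xp else yb + (n + k) - xp)) |
      (k < (if xa <= yq then yq - xa else yq + (n + k) - xa))].
Proof.
move=> hn h1 h2 h3 h4 h5.
case: (leqP xa ya) => ? /=; case: (leqP xp ya) => ? /=;
case: (leqP xa yb) => ? /=; 
case: (leqP xp yq) => ? /=; case: (leqP xp yb) => ? /=; case: (leqP xa yq) => ? /=; lia.
Qed.

Lemma short4 n k xp ya xa yb xb yq : 2 * k < n ->
  xp < n + k -> ya < n + k -> xa < n + k -> yb < n + k -> xb < n + k -> yq < n + k ->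
  ~~ clt n k xa ya -> ~~ clt n k xb yb -> clt n k xp ya -> clt n k xa yb ->
  clt n k xb yq -> ~~ clt n k xb ya ->
  [|| clt n k xp yq, clt n k xp yb | clt n k xa yq].
Proof.
move=> hn h1 h2 h3 h4 h5 h6.
have S := @clt_shift n k xb.
rewrite (S xp yq) // (S xp yb) // (S xa yq) // (S xa ya) // (S xb yb) // (S xp ya) //
  (S xa yb) // (S xb yq) // (S xb ya) // sh0 //.
have L := @sh_lt n k xb.
move: (L xp h5) (L ya h5) (L xa h5) (L yb h5) (L yq h5).
set Xp := sh n k xb xp; set Ya := sh n k xb ya; set Xa := sh n k xb xa;
set Yb := sh n k xb yb; set Yq := sh n k xb yq => g1 g2 g3 g4 g5.
have hN : 0 < n + k by lia.
rewrite !cltE // !leq0n !subn0.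
exact: short4'.
Qed.

Definition Dp n k (p q : 'I_(n+k) * 'I_(n+k)) : bool := clt n k p.1 q.2.

Lemma incE n k (p : 'I_(n+k) * 'I_(n+k)) : (p \in IncAB n k) = ~~ Dp n k p p.
Proof. by rewrite inE /crown_incomparable /= andbT. Qed.

Lemma adjE n k (p q : 'I_(n+k) * 'I_(n+k)) : G_adj p q = Dp n k p q && Dp n k q p.
Proof. by []. Qed.

Definition reach n k (R : {set 'I_(n+k) * 'I_(n+k)}) p q :=
  Dp n k p q || [exists m, (m \in R) && Dp n k p m && Dp n k m q].

Lemma reach_step n k (R : {set 'I_(n+k) * 'I_(n+k)}) : 2 * k < n -> R \subset IncAB n k -> G_independent R ->
  forall s p q, p \in R -> reach n k R s p -> Dp n k p q -> reach n k R s q.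
Proof.
move=> hn hR hI s p q pR /orP [hsp|/existsP [m /andP [/andP [mR hsm] hmp]]] hpq.
- by apply/orP; right; apply/existsP; exists p; rewrite pR hsp hpq.
- have mI : ~~ Dp n k m m by rewrite -incE (subsetP hR).
  have pI : ~~ Dp n k p p by rewrite -incE (subsetP hR).
  have hpm : ~~ Dp n k p m.
    by have := hI m p mR pR; rewrite adjE hmp.
  have := @short4 n k s.1 m.2 m.1 p.2 p.1 q.2 hn (ltn_ord _) (ltn_ord _) (ltn_ord _)
    (ltn_ord _) (ltn_ord _) (ltn_ord _) mI pI hsm hmp hpq hpm.
  case/or3P => h.
  + by apply/orP; left.
  + by apply/orP; right; apply/existsP; exists p; apply/andP; split => //; apply/andP; split.
  + by apply/orP; right; apply/existsP; exists m; apply/andP; split => //; apply/andP; split.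
Qed.

Lemma reach_irr n k (R : {set 'I_(n+k) * 'I_(n+k)}) : R \subset IncAB n k -> G_independent R ->
  forall p, p \in R -> ~~ reach n k R p p.
Proof.
move=> hR hI p pR; rewrite /reach negb_or -incE (subsetP hR) //=.
apply/existsPn => m; apply/negP => /andP [/andP [mR h1] h2].
by have := hI p m pR mR; rewrite adjE h1 h2.
Qed.

Definition AncA n k (R : {set 'I_(n+k) * 'I_(n+k)}) (x : 'I_(n+k)) :
  {set 'I_(n+k) * 'I_(n+k)} :=
  [set s in R | [exists p, (p \in R) && ((p.1 == x) && ((s == p) || reach n k R s p))]].

Definition AncB n k (R : {set 'I_(n+k) * 'I_(n+k)}) (y : 'I_(n+k)) :
  {set 'I_(n+k) * 'I_(n+k)} :=
  [set s in R | [exists p, (p \in R) && (clt n k p.1 y && ((s == p) || reach n k R s p))]].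

Definition key n k (R : {set 'I_(n+k) * 'I_(n+k)}) (e : crown_elt n k) : nat :=
  match e with
  | inl x => 2 * #|AncA n k R x|
  | inr y => (2 * #|AncB n k R y|).+1
  end.

Definition Lrel n k (R : {set 'I_(n+k) * 'I_(n+k)}) : rel (crown_elt n k) :=
  fun e f => (key n k R e < key n k R f) ||
             ((key n k R e == key n k R f) && (enum_rank e < enum_rank f)).

Lemma AncA_sub n k (R : {set 'I_(n+k) * 'I_(n+k)}) (x y : 'I_(n+k)) : clt n k x y -> AncA n k R x \subset AncB n k R y.
Proof.
move=> hxy; apply/subsetP => s; rewrite !inE => /andP [sR /existsP [p /andP [pR /andP [/eqP px h]]]].
rewrite sR /=; apply/existsP; exists p; rewrite pR /= px hxy /=; exact: h.
Qed.

Lemma AncB_proper n k (R : {set 'I_(n+k) * 'I_(n+k)}) (x y : 'I_(n+k)) : 2 * k < n -> R \subset IncAB n k -> G_independent R ->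
  (x, y) \in R -> AncB n k R y \proper AncA n k R x.
Proof.
move=> hn hR hI xyR; apply/properP; split.
- apply/subsetP => s; rewrite !inE => /andP [sR /existsP [p /andP [pR /andP [hpy h]]]].
  rewrite sR /=; apply/existsP; exists (x, y); rewrite xyR eqxx /=.
  case/orP: h => [/eqP ->|h]; apply/orP; right.
  + by apply/orP; left.
  + exact: (@reach_step n k R hn hR hI _ _ (x, y) pR h hpy).
- exists (x, y).
  + by rewrite !inE xyR /=; apply/existsP; exists (x, y); rewrite xyR !eqxx.
  + rewrite !inE xyR /=; apply/negP => /existsP [p /andP [pR /andP [hpy h]]].
    case/orP: h => [/eqP eq|h].
    * have := (subsetP hR _ xyR); rewrite incE /Dp /=.
      by rewrite -eq /= in hpy; rewrite hpy.
    * have := @reach_step n k R hn hR hI _ _ (x, y) pR h hpy.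
      by rewrite (negbTE (@reach_irr n k R hR hI _ xyR)).
Qed.

Lemma rev_main n k (R : {set 'I_(n+k) * 'I_(n+k)}) : 2 * k < n -> R \subset IncAB n k ->
  G_independent R -> reversible R.
Proof.
move=> hn hR hI; exists (Lrel n k R); split; first split.
- by move=> e; rewrite /Lrel ltnn eqxx ltnn.
- move=> y x z; rewrite /Lrel; lia.
- move=> x y hxy.
  have hne : (enum_rank x : nat) != enum_rank y.
    by apply: contra hxy => /eqP h; apply/eqP; apply: enum_rank_inj; apply: val_inj.
  rewrite /Lrel; lia.
- move=> [x|x] [y|y] //= h.
  rewrite /Lrel /=; apply/orP; left.
  have := subset_leq_card (@AncA_sub n k R x y h).
  set a := #|AncA n k R x|; set b := #|AncB n k R y|; lia.
- move=> [x y] xyR; rewrite /Lrel /=; apply/orP; left.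
  have := proper_card (@AncB_proper n k R x y hn hR hI xyR).
  set a := #|AncA n k R x|; set b := #|AncB n k R y|; lia.
Qed.

Lemma cyc3 n k (R : {set 'I_(n+k) * 'I_(n+k)}) p q r :
  p \in R -> q \in R -> r \in R -> Dp n k p q -> Dp n k q r -> Dp n k r p -> ~ reversible R.
Proof.
move=> pR qR rR hpq hqr hrp [L [[irr tr tot ext] rev]].
have t : forall x y z, L x y -> L y z -> L x z by move=> x y z; apply: tr.
have e1 : L (inl p.1) (inr q.2) by apply: ext.
have e2 : L (inl q.1) (inr r.2) by apply: ext.
have e3 : L (inl r.1) (inr p.2) by apply: ext.
have := t _ _ _ (rev p pR) (t _ _ _ e1 (t _ _ _ (rev q qR) (t _ _ _ e2 (t _ _ _ (rev r rR) e3)))).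
by rewrite irr.
Qed.

Ltac crunch := rewrite /= ?modE; try lia;
  repeat match goal with |- context [if ?b then _ else _] => case: (boolP b) => ? end; try lia.

Lemma easy n k : 3 <= n -> n <= 2 * k -> exists R : {set 'I_(n + k) * 'I_(n + k)},
      R \subset IncAB n k /\ G_independent R /\ ~ reversible R.
Proof.
move=> h3 hn.
have h0 : 0 < n + k by lia.
have h1 : 1 < n + k by lia.
have hk : k < n + k by lia.
have hk1 : k.+1 < n + k by lia.
have hnN : n < n + k by lia.
pose o0 := Ordinal h0; pose o1 := Ordinal h1; pose ok := Ordinal hk;
pose ok1 := Ordinal hk1; pose on := Ordinal hnN.
case: (leqP n k.+1) => hc.
- exists [set (o0, o0); (on, ok1); (o1, o1)]; split; [|split].
  + apply/subsetP => p; rewrite !inE -orbA; case/or3P => /eqP ->; rewrite /crown_incomparable; crunch.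
  + move=> u v; rewrite !inE -!orbA; case/or3P => /eqP ->; case/or3P => /eqP ->;
      rewrite adjE /Dp /clt; crunch.
  + apply: (@cyc3 n k _ (o0, o0) (on, ok1) (o1, o1)); rewrite ?inE ?eqxx ?orbT //;
      rewrite /Dp /clt; crunch.
- exists [set (o0, o0); (on, on); (ok, ok)]; split; [|split].
  + apply/subsetP => p; rewrite !inE -orbA; case/or3P => /eqP ->; rewrite /crown_incomparable; crunch.
  + move=> u v; rewrite !inE -!orbA; case/or3P => /eqP ->; case/or3P => /eqP ->;
      rewrite adjE /Dp /clt; crunch.
  + apply: (@cyc3 n k _ (o0, o0) (on, on) (ok, ok)); rewrite ?inE ?eqxx ?orbT //;
      rewrite /Dp /clt; crunch.
Qed.

Theorem lemma1p4 (n k : nat) (hn : 3 <= n) :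
  (exists R : {set 'I_(n + k) * 'I_(n + k)},
      R \subset IncAB n k /\ G_independent R /\ ~ reversible R)
  <-> n <= 2 * k.
Proof.
split.
- move=> [R [hR [hI hnr]]]; rewrite leqNgt; apply/negP => h.
  by apply: hnr; apply: rev_main.
- exact: easy.
Qed.
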